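(* Let $\sigma_0\ge\sigma_1\ge\dots\ge\sigma_{r-1}>0$ with $\sum_{i=0}^{r-1}\sigma_i^2=1$ and $r\le\min(N_1,N_2)$ (with $\sigma_1:=0$ if $r=1$), let $|\sigma\rangle=\sum_{i=0}^{r-1}\sigma_i|ii\rangle\in\mathbb{C}^{N_1}\otimes\mathbb{C}^{N_2}$, let $\lambda\in[0,1]$ and $Q=(1-\lambda)\frac{\mathbb{I}_{N_1N_2}}{N_1N_2}+\lambda|\sigma\rangle\langle\sigma|$. Then $Q^{T_1}\ge0$ if and only if $\lambda\le\frac{1}{1+N_1N_2\sigma_0\sigma_1}$.
   Context: $Q^{T_1}$ denotes the partial transpose of $Q$ with respect to the first tensor factor in the computational basis: $(|a\rangle\langle b|\otimes|c\rangle\langle d|)^{T_1}=|b\rangle\langle a|\otimes|c\rangle\langle d|$, extended linearly. *)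

(* Defs.v *)
(* Complex numbers: R[i] over a real closed field R
   (mathcomp-real-closed); the paper's reals are the case R = real numbers. *)
From HB Require Import structures.
From mathcomp Require Import all_boot all_order all_algebra.
From mathcomp Require Import complex.
Set Implicit Arguments. Unset Strict Implicit. Unset Printing Implicit Defensive.
Import Order.TTheory GRing.Theory Num.Theory.
Local Open Scope ring_scope.

Section Defs.
Variable R : rcfType.
Local Notation C := (complex R).

Definition adjmx (m n : nat) (A : 'M[C]_(m, n)) : 'M[C]_(n, m) :=
  (map_mx Num.conj A)^T.

(* positive semidefinite (A >= 0): <v|A|v> is real and nonnegative for all v *)
Definition psdmx (n : nat) (A : 'M[C]_n) : Prop :=
  forall v : 'cV[C]_n, 0 <= (adjmx v *m A *m v) 0 0.

(* Basis of C^N1 (x) C^N2: |a>|c> is the basis vector with index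
   mxvec_index a c.  Hence |a><b| (x) |c><d| = delta_mx (idx a c) (idx b d). *)
Definition ptrans1 (N1 N2 : nat) (M : 'M[C]_(N1 * N2)) : 'M[C]_(N1 * N2) :=
  \sum_(a < N1) \sum_(b < N1) \sum_(c < N2) \sum_(d < N2)
     M (mxvec_index a c) (mxvec_index b d)
       *: delta_mx (mxvec_index b c) (mxvec_index a d).

Definition sigket (N1 N2 r : nat) (sigma : nat -> R) : 'cV[C]_(N1 * N2) :=
  (mxvec (\matrix_(a < N1, c < N2)
            (if ((a : nat) == c) && ((a : nat) < r)%N then real_complex R (sigma a)
             else 0)))^T.

Definition Qmx (N1 N2 r : nat) (sigma : nat -> R) (lam : R) : 'M[C]_(N1 * N2) :=
  real_complex R ((1 - lam) / (N1 * N2)%:R) *: 1%:M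
  + real_complex R lam *: (sigket N1 N2 r sigma *m adjmx (sigket N1 N2 r sigma)).

End Defs.

(* Main.v *)
Require Import Defs.
From HB Require Import structures.
From mathcomp Require Import all_boot all_order all_algebra.
From mathcomp Require Import complex ring lra.
Import Order.TTheory GRing.Theory Num.Theory.
Local Open Scope ring_scope.
Local Open Scope complex_scope.

Section S.
Variable R : rcfType.
Local Notation C := (complex R).

Lemma conjE (x : C) : Num.conj x = conjc x.
Proof. reflexivity. Qed.

Lemma sum_if (T : finType) (j : T) (F : T -> C) :
  \sum_i (if i == j then F i else 0) = F j.
Proof. by rewrite -big_mkcond big_pred1_eq. Qed.

Lemma sum_if' (T : finType) (j : T) (F : T -> C) :
  \sum_i (if j == i then F i else 0) = F j.
Proof. by rewrite -(sum_if _ j F); apply: eq_bigr => i _; rewrite eq_sym. Qed.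

Lemma sum2_if (T U : finType) (x0 : T) (y0 : U) (F : T -> U -> C) :
  \sum_x \sum_y (if (x == x0) && (y == y0) then F x y else 0) = F x0 y0.
Proof.
rewrite -(sum_if _ x0 (fun x => F x y0)); apply: eq_bigr => x _.
case: (x == x0) => /=; first by rewrite sum_if.
by rewrite big1.
Qed.

Variables N1 N2 : nat.
Local Notation idx := (@mxvec_index N1 N2).

Lemma idx_eq a b c d : (idx a c == idx b d) = (a == b) && (c == d).
Proof.
apply/eqP/andP => [H|[/eqP-> /eqP->]] //.
have := congr1 (enum_val \o cast_ord (esym (mxvec_cast N1 N2))) H.
by rewrite /= /mxvec_index !cast_ordK !enum_rankK => -[-> ->].
Qed.

Lemma sum_idx (F : 'I_(N1 * N2) -> C) : \sum_k F k = \sum_x \sum_y F (idx x y).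
Proof.
rewrite pair_bigA (reindex (uncurry idx)) /=; last exact: curry_mxvec_bij.
by apply: eq_bigr => -[x y].
Qed.

Lemma ptrans1E (M : 'M[C]_(N1*N2)) a b c d :
  ptrans1 M (idx b c) (idx a d) = M (idx a c) (idx b d).
Proof.
rewrite /ptrans1 summxE.
transitivity (\sum_(a' < N1) \sum_(b' < N1) \sum_(c' < N2) \sum_(d' < N2)
  if d' == d then if c' == c then if b' == b then if a' == a then
    M (idx a' c') (idx b' d') else 0 else 0 else 0 else 0).
  apply: eq_bigr => a' _; rewrite summxE; apply: eq_bigr => b' _.
  rewrite summxE; apply: eq_bigr => c' _; rewrite summxE; apply: eq_bigr => d' _.
  rewrite !mxE !idx_eq (eq_sym b) (eq_sym c) (eq_sym a) (eq_sym d).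
  by case: (d' == d); case: (c' == c); case: (b' == b); case: (a' == a);
    rewrite /= ?mulr1 ?mulr0.
under eq_bigr do under eq_bigr do under eq_bigr do rewrite sum_if.
under eq_bigr do under eq_bigr do rewrite sum_if.
under eq_bigr do rewrite sum_if.
by rewrite sum_if.
Qed.

Lemma qformE (A : 'M[C]_(N1*N2)) (v : 'cV[C]_(N1*N2)) :
  (adjmx v *m A *m v) 0 0 = \sum_x \sum_y \sum_z \sum_w
    conjc (v (idx x y) 0) * A (idx x y) (idx z w) * v (idx z w) 0.
Proof.
rewrite mxE; under eq_bigr do rewrite mxE mulr_suml.
rewrite exchange_big sum_idx; apply: eq_bigr => x _; apply: eq_bigr => y _.
rewrite sum_idx; apply: eq_bigr => z _; apply: eq_bigr => w _.
by rewrite !mxE conjE.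
Qed.

Variables (r : nat) (sigma : nat -> R) (H1 : (r <= N1)%N) (H2 : (r <= N2)%N).
Local Notation e1 := (widen_ord H1).
Local Notation e2 := (widen_ord H2).

Definition sk (a : 'I_N1) (c : 'I_N2) : C :=
  if ((a:nat) == c) && (a < r)%N then real_complex R (sigma a) else 0.

Lemma sigketE a c : sigket N1 N2 r sigma (idx a c) 0 = sk a c.
Proof. by rewrite /sigket mxE mxvecE mxE. Qed.

Lemma conj_sk a c : conjc (sk a c) = sk a c.
Proof. by rewrite /sk; case: ifP => _; rewrite ?conjc_real ?conjc0. Qed.

Lemma QmxE lam a b c d :
  Qmx N1 N2 r sigma lam (idx a c) (idx b d) =
  real_complex R ((1 - lam) / (N1 * N2)%:R) * ((a == b) && (c == d))%:R
  + real_complex R lam * (sk a c * sk b d).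
Proof.
rewrite /Qmx !mxE big_ord1 !mxE idx_eq !mxvecE !mxE -/(sk a c) -/(sk b d) ?conjE conj_sk.
by [].
Qed.

Lemma sk_sum z y : sk z y =
  \sum_(a < r) (if e1 a == z then if e2 a == y then real_complex R (sigma a) else 0 else 0).
Proof.
case hz: (z < r)%N.
  pose a0 : 'I_r := Ordinal hz.
  rewrite (eq_bigr (fun a => if a == a0 then
     (if e2 a0 == y then real_complex R (sigma a0) else 0) else 0)); last first.
    move=> a _; have -> : (e1 a == z) = (a == a0) by rewrite -!val_eqE.
    by case: eqP => [->|].
  rewrite sum_if /sk hz andbT -val_eqE /=.
  by case: eqP.
rewrite /sk hz andbF big1 // => a _.
case: eqP => // Ha; move: (ltn_ord a); rewrite -[X in (X < _)%N]/(val (e1 a)) Ha hz.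
by [].
Qed.

Lemma sum_sk (F : 'I_N1 -> 'I_N2 -> C) :
  \sum_z \sum_y sk z y * F z y = \sum_(a < r) real_complex R (sigma a) * F (e1 a) (e2 a).
Proof.
transitivity (\sum_z \sum_y \sum_(a < r)
   (if e1 a == z then if e2 a == y then real_complex R (sigma a) * F z y else 0 else 0)).
  apply: eq_bigr => z _; apply: eq_bigr => y _; rewrite sk_sum mulr_suml.
  apply: eq_bigr => a _; case: ifP => _; last by rewrite mul0r.
  by case: ifP => _; rewrite ?mul0r.
rewrite exchange_big /=; under eq_bigr do rewrite exchange_big /=.
rewrite exchange_big /=; apply: eq_bigr => a _.
under eq_bigr do rewrite sum_if'.
by rewrite sum_if'.
Qed.


Definition Vf (v : 'cV[C]_(N1*N2)) x y := v (idx x y) 0.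

Lemma qdecomp lam v :
  (adjmx v *m ptrans1 (Qmx N1 N2 r sigma lam) *m v) 0 0 =
  real_complex R ((1 - lam) / (N1 * N2)%:R) *
     (\sum_x \sum_y conjc (Vf v x y) * Vf v x y) +
  real_complex R lam * (\sum_(a < r) \sum_(b < r)
     real_complex R (sigma a) * real_complex R (sigma b) *
     (conjc (Vf v (e1 b) (e2 a)) * Vf v (e1 a) (e2 b))).
Proof.
set al := real_complex R _; set la := real_complex R lam.
rewrite qformE.
transitivity (\sum_x \sum_y \sum_z \sum_w
  (al * (if y == w then if z == x then conjc (Vf v x y) * Vf v z w else 0 else 0)
   + la * (sk z y * sk x w * (conjc (Vf v x y) * Vf v z w)))).
  apply: eq_bigr => x _; apply: eq_bigr => y _; apply: eq_bigr => z _.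
  apply: eq_bigr => w _; rewrite ptrans1E QmxE /Vf.
  case: (y == w); case: (z == x); rewrite /= ?mulr1 ?mulr0; ring.
have EA : \sum_x \sum_y \sum_z \sum_w
  (al * (if y == w then if z == x then conjc (Vf v x y) * Vf v z w else 0 else 0))
  = al * (\sum_x \sum_y conjc (Vf v x y) * Vf v x y).
  rewrite mulr_sumr; apply: eq_bigr => x _; rewrite mulr_sumr; apply: eq_bigr => y _.
  under eq_bigr do rewrite -mulr_sumr sum_if'.
  by rewrite -mulr_sumr sum_if.
have EB : \sum_x \sum_y \sum_z \sum_w
   (la * (sk z y * sk x w * (conjc (Vf v x y) * Vf v z w))) =
  la * (\sum_(a < r) \sum_(b < r)
     real_complex R (sigma a) * real_complex R (sigma b) *
     (conjc (Vf v (e1 b) (e2 a)) * Vf v (e1 a) (e2 b))).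
  transitivity (\sum_x \sum_w sk x w * (\sum_z \sum_y sk z y *
      (la * conjc (Vf v x y) * Vf v z w))).
    apply: eq_bigr => x _.
    rewrite exchange_big /=; under eq_bigr do rewrite exchange_big /=.
    rewrite exchange_big /=; apply: eq_bigr => w _.
    rewrite mulr_sumr; apply: eq_bigr => z _; rewrite mulr_sumr; apply: eq_bigr => y _.
    ring.
  under eq_bigr do under eq_bigr do rewrite sum_sk.
  rewrite sum_sk [X in la * X]exchange_big /= mulr_sumr; apply: eq_bigr => b _.
  rewrite !mulr_sumr; apply: eq_bigr => a _; ring.
rewrite -EA -EB -big_split /=; apply: eq_bigr => x _; rewrite -big_split.
apply: eq_bigr => y _; rewrite -big_split; apply: eq_bigr => z _.
by rewrite -big_split.
Qed.


Lemma sum_narrow n (H : (r <= n)%N) (f : 'I_n -> C) :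
  (forall x, 0 <= f x) -> \sum_(a < r) f (widen_ord H a) <= \sum_x f x.
Proof.
move=> f0; rewrite (bigID (fun x : 'I_n => (x < r)%N)) /= (big_ord_narrow H).
by rewrite lerDl sumr_ge0.
Qed.

Lemma key (A L t : R) (p q : C) : 0 <= A -> 0 <= L -> 0 <= t ->
  (L * t <= A \/ p = q) ->
  0 <= real_complex R A * (conjc p * p + conjc q * q)
       + real_complex R (L * t) * (conjc q * p + conjc p * q).
Proof.
move=> hA hL ht; case: p => p1 p2; case: q => q1 q2 h; simpc.
apply/andP; split; first by apply/eqP; ring.
have hLt : 0 <= L * t by apply: mulr_ge0.
case: h => [h|[<- <-]].
  have h1 : 0 <= (A - L * t) * (p1 * p1 + p2 * p2 + (q1 * q1 + q2 * q2)).
    by apply: mulr_ge0; [lra | rewrite -!expr2 !addr_ge0 ?sqr_ge0].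
  have h2 : 0 <= (L * t) * ((p1 + q1)^+2 + (p2 + q2)^+2).
    by apply: mulr_ge0 => //; rewrite addr_ge0 ?sqr_ge0.
  nra.
have h2 : 0 <= (A + L * t) * (p1 * p1 + p2 * p2).
  by apply: mulr_ge0; [lra | rewrite -!expr2 !addr_ge0 ?sqr_ge0].
nra.
Qed.

Lemma psd_of (lam m : R) :
  0 <= lam -> (forall i, (i < r)%N -> 0 <= sigma i) ->
  (forall a b : 'I_r, a != b -> sigma a * sigma b <= m) ->
  lam * m <= (1 - lam) / (N1 * N2)%:R ->
  0 <= (1 - lam) / (N1 * N2)%:R ->
  psdmx (ptrans1 (Qmx N1 N2 r sigma lam)).
Proof.
move=> hl hs hm hlm hal v; rewrite qdecomp.
set al := (1 - lam) / _.
pose U (a b : 'I_r) : C := Vf v (e1 a) (e2 b).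
have hS : \sum_(a < r) \sum_(b < r) conjc (U a b) * U a b <=
          \sum_x \sum_y conjc (Vf v x y) * Vf v x y.
  have hx : forall x, 0 <= \sum_y conjc (Vf v x y) * Vf v x y.
    by move=> x; apply: sumr_ge0 => y _; rewrite mulrC mulcJ_ge0.
  apply: (le_trans _ (sum_narrow _ H1 _ hx)); apply: ler_sum => a _.
  apply: (sum_narrow _ H2 (fun y => conjc (Vf v (e1 a) y) * Vf v (e1 a) y)).
  by move=> y; rewrite mulrC mulcJ_ge0.
have hal' : 0 <= real_complex R al by rewrite ler0c.
apply: (le_trans _ (lerD (ler_wpM2l hal' hS) (lexx _))).
pose g a b := real_complex R al * (conjc (U a b) * U a b) +
   real_complex R lam * (real_complex R (sigma a) * real_complex R (sigma b) *
     (conjc (U b a) * U a b)).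
have -> : real_complex R al * (\sum_(a < r) \sum_(b < r) conjc (U a b) * U a b) +
  real_complex R lam * (\sum_(a < r) \sum_(b < r)
     real_complex R (sigma a) * real_complex R (sigma b) *
     (conjc (Vf v (e1 b) (e2 a)) * Vf v (e1 a) (e2 b))) = \sum_a \sum_b g a b.
  rewrite !mulr_sumr -big_split; apply: eq_bigr => a _.
  by rewrite !mulr_sumr -big_split.
suff : 0 <= 2%:R * \sum_a \sum_b g a b.
  by rewrite pmulr_rge0 // ltr0n.
have -> : 2%:R * \sum_a \sum_b g a b = \sum_a \sum_b (g a b + g b a).
  rewrite mulr2n mulrDl mul1r.
  rewrite [X in _ + X = _]exchange_big /= -big_split; apply: eq_bigr => a _.
  by rewrite -big_split.
apply: sumr_ge0 => a _; apply: sumr_ge0 => b _.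
have -> : g a b + g b a = real_complex R al * (conjc (U a b) * U a b + conjc (U b a) * U b a)
   + real_complex R (lam * (sigma a * sigma b)) *
      (conjc (U b a) * U a b + conjc (U a b) * U b a).
  by rewrite /g !rmorphM /=; ring.
apply: key => //.
  by apply: mulr_ge0; apply: hs.
case: (eqVneq a b) => [->|nab]; [by right | left].
by apply: (le_trans _ hlm); apply: ler_wpM2l => //; apply: hm.
Qed.


Lemma natb (b : bool) : (b%:R : C) = if b then 1 else 0.
Proof. by case: b. Qed.

Lemma delta_sq (b1 b2 : bool) : ~~ (b1 && b2) ->
  conjc ((b1%:R - b2%:R : C)) * (b1%:R - b2%:R) = b1%:R + b2%:R.
Proof. by case: b1; case: b2 => // _; simpc. Qed.

Lemma delta_cross (b1 b2 : bool) : ~~ (b1 && b2) ->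
  conjc ((b2%:R - b1%:R : C)) * (b1%:R - b2%:R) = - (b1%:R + b2%:R).
Proof. by case: b1; case: b2 => // _; simpc. Qed.

Lemma e1_eq (a b : 'I_r) : (e1 a == e1 b) = (a == b).
Proof. by rewrite -!val_eqE. Qed.
Lemma e2_eq (a b : 'I_r) : (e2 a == e2 b) = (a == b).
Proof. by rewrite -!val_eqE. Qed.

Lemma psd_imp lam : (1 < r)%N -> psdmx (ptrans1 (Qmx N1 N2 r sigma lam)) ->
  lam * (sigma 0%N * sigma 1%N) <= (1 - lam) / (N1 * N2)%:R.
Proof.
move=> h1r hpsd.
have hr0 : (0 < r)%N by apply: leq_trans h1r.
pose a0 : 'I_r := Ordinal hr0; pose a1 : 'I_r := Ordinal h1r.
have a01 : (a0 == a1) = false by [].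
pose v : 'cV[C]_(N1 * N2) :=
  delta_mx (idx (e1 a0) (e2 a1)) 0 - delta_mx (idx (e1 a1) (e2 a0)) 0.
have hV x y : Vf v x y = ((x == e1 a0) && (y == e2 a1))%:R
                       - ((x == e1 a1) && (y == e2 a0))%:R.
  by rewrite /Vf !mxE !idx_eq !andbT.
have hS : \sum_x \sum_y conjc (Vf v x y) * Vf v x y = 1 + 1.
  transitivity (\sum_x \sum_y ((if (x == e1 a0) && (y == e2 a1) then 1 else 0)
     + (if (x == e1 a1) && (y == e2 a0) then 1 else 0) : C)).
    apply: eq_bigr => x _; apply: eq_bigr => y _.
    rewrite hV delta_sq ?natb //.
    apply/negP => /andP[/andP[/eqP hx _] /andP[/eqP hx' _]].
    by move: a01; rewrite -e1_eq -hx hx' eqxx.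
  under eq_bigr do rewrite big_split.
  by rewrite big_split /= !(sum2_if _ _ _ _ (fun _ _ => 1)).
have hT : \sum_(a < r) \sum_(b < r)
     real_complex R (sigma a) * real_complex R (sigma b) *
     (conjc (Vf v (e1 b) (e2 a)) * Vf v (e1 a) (e2 b)) =
   - (real_complex R (sigma 0%N) * real_complex R (sigma 1%N)
      + real_complex R (sigma 1%N) * real_complex R (sigma 0%N)).
  transitivity (- (\sum_a \sum_b ((if (a == a0) && (b == a1) then
        real_complex R (sigma a) * real_complex R (sigma b) else 0)
     + (if (a == a1) && (b == a0) then
        real_complex R (sigma a) * real_complex R (sigma b) else 0)))).
    rewrite -sumrN; apply: eq_bigr => a _; rewrite -sumrN; apply: eq_bigr => b _.
    rewrite !hV !e1_eq !e2_eq.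
    rewrite [(b == a0) && _]andbC [(b == a1) && _]andbC delta_cross.
      by case: (_ && _); case: (_ && _) => /=; ring.
    apply/negP => /andP[/andP[/eqP ha _] /andP[/eqP ha' _]].
    by move: a01; rewrite -ha ha' eqxx.
  under eq_bigr do rewrite big_split.
  rewrite big_split /= !(sum2_if _ _ _ _ (fun a b : 'I_r => real_complex R (sigma a) * real_complex R (sigma b))).
  by [].
have := hpsd v; rewrite qdecomp hS hT; simpc.
move=> /= h; nra.
Qed.

End S.

Theorem lemma4 (R : rcfType) (N1 N2 r : nat) (sigma : nat -> R) (lam : R) :
  (0 < r)%N -> (r <= minn N1 N2)%N ->
  (forall i : nat, (i < r)%N -> 0 < sigma i) ->
  (forall i : nat, (i.+1 < r)%N -> sigma i.+1 <= sigma i) ->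
  \sum_(i < r) sigma i ^+ 2 = 1 ->
  0 <= lam <= 1 ->
  (psdmx (ptrans1 (Qmx N1 N2 r sigma lam)) <->
   lam <= 1 / (1 + (N1 * N2)%:R * sigma 0%N * (if (1 < r)%N then sigma 1%N else 0))).
Proof.
move=> hr hrmin hpos hmono _ /andP[hl0 hl1].
have H1 : (r <= N1)%N by apply: leq_trans hrmin (geq_minl _ _).
have H2 : (r <= N2)%N by apply: leq_trans hrmin (geq_minr _ _).
have hN : 0 < (N1 * N2)%:R :> R.
  by rewrite ltr0n muln_gt0 (leq_trans hr H1) (leq_trans hr H2).
have mono : forall i j, (i <= j)%N -> (j < r)%N -> sigma j <= sigma i.
  move=> i j; elim: j => [|j IH] hij hj.
    by move: hij; rewrite leqn0 => /eqP ->.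
  case: (eqVneq i j.+1) => [-> //|hne].
  have hij' : (i <= j)%N by rewrite -ltnS ltn_neqAle hne hij.
  exact: le_trans (hmono j hj) (IH hij' (ltnW hj)).
have hs0 : forall i, (i < r)%N -> 0 <= sigma i by move=> i hi; apply/ltW/hpos.
set N := (N1 * N2)%:R in hN *.
set s1 := if (1 < r)%N then sigma 1%N else 0.
have hs1 : 0 <= s1 by rewrite /s1; case: ifP => // h; apply: hs0.
have hsig0 : 0 <= sigma 0%N by apply: hs0.
have hm : 0 <= sigma 0%N * s1 by apply: mulr_ge0.
have hpos1 : 0 < 1 + N * sigma 0%N * s1.
  have : 0 <= N * (sigma 0%N * s1) by apply: mulr_ge0 => //; apply: ltW.
  rewrite -mulrA; lra.
rewrite ler_pdivlMr //.
split.
  move=> hpsd; case h1r: (1 < r)%N.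
    have := psd_imp _ _ _ _ _ H1 H2 _ h1r hpsd.
    rewrite -/N ler_pdivlMr // /s1 h1r => h.
    nra.
  by rewrite /s1 h1r !mulr0 addr0 mulr1.
move=> hle.
apply: (psd_of _ _ _ _ _ H1 H2 lam (sigma 0%N * s1)) => //.
- move=> a b hab.
  wlog lab : a b hab / (a < b)%N.
    move=> W; case: (ltngtP a b) => [h|h|h]; first exact: W.
      by rewrite mulrC; apply: W => //; rewrite eq_sym.
    by move: hab; rewrite (val_inj h) eqxx.
  have h1r : (1 < r)%N by apply: leq_ltn_trans (ltn_ord b); apply: leq_ltn_trans lab.
  rewrite /s1 h1r; apply: ler_pM.
  - exact: hs0 (ltn_ord a).
  - exact: hs0 (ltn_ord b).
  - exact: mono (leq0n _) (ltn_ord a).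
  - exact: mono (leq_ltn_trans (leq0n _) lab) (ltn_ord b).
- rewrite -/N ler_pdivlMr //; nra.
- by apply: divr_ge0; [lra | apply: ltW].
Qed.
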